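(* Let $|z|<1$. For $l=1,2,3,4$, \[ |V_l(z)|\le \sum_{j=1}^{l} C_{V,l,j}\frac{|\log(1-|z|)|^j}{j!}, \] with $C_{V,1,1}=2$; $C_{V,2,1} = |\lambda/2-2|$, $C_{V,2,2}=4$; $C_{V,3,1} = |\lambda^2/16-\lambda+2|$, $C_{V,3,2} = |3\lambda-12|+|\lambda-4|$, $C_{V,3,3}=8$; $C_{V,4,1} = |\lambda^3/192-\lambda^2/8-\lambda/2-2|+|2\lambda\zeta(3)|$, $C_{V,4,2} = |\lambda^2/8-2\lambda+4|+|\lambda^2/4-4\lambda+12|+|5\lambda^2/8-8\lambda+28|$, $C_{V,4,3} = |2\lambda-8|+|6\lambda-24|+|14\lambda-56|$, $C_{V,4,4}=16$. Moreover, if $|z|\le a<1$ (with $a>0$), then $|V_l(z)|\le D_{l,a}|z|$, where \[ D_{l,a} = \sum_{j=1}^{l} C_{V,l,j}\frac{|\log(1-a)|^j}{a\cdot j!}. \]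
   Context: Let $\lambda = j_{0,1}^2$ ($j_{0,1}$ the first positive zero of $J_0$) and $\zeta$ the Riemann zeta function. For positive integers $m_1,\dots,m_k$ and $|z|<1$, $\mathrm{Li}_{m_1,\dots,m_k}(z) = \sum_{0<n_1<\dots<n_k}\frac{z^{n_k}}{n_1^{m_1}\cdots n_k^{m_k}}$. Define $V_1 = 2\mathrm{Li}_1$, $V_2 = (\frac{\lambda}{2}-2)\mathrm{Li}_2+4\mathrm{Li}_{1,1}$, $V_3 = (\frac{\lambda^2}{16}-\lambda+2)\mathrm{Li}_3+(3\lambda-12)\mathrm{Li}_{1,2}+(\lambda-4)\mathrm{Li}_{2,1}+8\mathrm{Li}_{1,1,1}$, $V_4 = (\frac{\lambda^3}{192}-\frac{\lambda^2}{8}-\frac{\lambda}{2}-2)\mathrm{Li}_4+(\frac{\lambda^2}{8}-2\lambda+4)\mathrm{Li}_{3,1}+(\frac{\lambda^2}{4}-4\lambda+12)\mathrm{Li}_{2,2}+(\frac{5\lambda^2}{8}-8\lambda+28)\mathrm{Li}_{1,3}+(2\lambda-8)\mathrm{Li}_{2,1,1}+(6\lambda-24)\mathrm{Li}_{1,2,1}+(14\lambda-56)\mathrm{Li}_{1,1,2}+16\mathrm{Li}_{1,1,1,1}+2\lambda\zeta(3)\mathrm{Li}_1$. *)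

(* Defs.v *)
From Stdlib Require Import Reals List Arith.
From Coquelicot Require Import Coquelicot.
Import ListNotations.
Open Scope R_scope.

Fixpoint sum_lt (f : nat -> R) (N : nat) : R :=
  match N with
  | O => 0
  | S M => sum_lt f M + f M
  end.

(* Coefficient of z^N in Li_{m_1,...,m_k}(z), with the index list given in
   REVERSED order [m_k; m_{k-1}; ...; m_1]:
     coef_rev [m_k;...;m_1] N = sum_{0<n_1<...<n_{k-1}<n_k = N} 1/(n_1^{m_1}...n_k^{m_k}). *)
Fixpoint coef_rev (ms : list nat) (N : nat) : R :=
  match ms with
  | [] => match N with O => 1 | S _ => 0 end
  | m :: rest =>
      match N with
      | O => 0
      | S _ => / (INR N ^ m) * sum_lt (coef_rev rest) N
      end
  end.

(* Sum of a complex series, computed componentwise (agrees with the limit of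
   partial sums whenever the complex series converges). *)
Definition CSeries (a : nat -> C) : C :=
  (Series (fun n => Re (a n)), Series (fun n => Im (a n))).

(* Multiple polylogarithm Li_{m_1,...,m_k}(z) = sum_{0<n_1<...<n_k} z^{n_k}/(n_1^{m_1}...n_k^{m_k}),
   list given in the paper's order [m_1; ...; m_k]. *)
Definition Li (ms : list nat) (z : C) : C :=
  CSeries (fun N => Cmult (RtoC (coef_rev (rev ms) N)) (Cpow z N)).

Definition J0 (x : R) : R :=
  Series (fun k => (-1) ^ k * (x / 2) ^ (2 * k) / (INR (Factorial.fact k)) ^ 2).

Definition zeta3 : R := Series (fun n => / (INR (S n)) ^ 3).

Definition sc (r : R) (w : C) : C := Cmult (RtoC r) w.

(* V_l(z), depending on the parameter lam (= j_{0,1}^2) *)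
Definition V (lam : R) (l : nat) (z : C) : C :=
  match l with
  | 1%nat => sc 2 (Li [1%nat] z)
  | 2%nat => Cplus (sc (lam/2 - 2) (Li [2%nat] z)) (sc 4 (Li [1;1]%nat z))
  | 3%nat =>
      Cplus (sc (lam^2/16 - lam + 2) (Li [3%nat] z))
     (Cplus (sc (3*lam - 12) (Li [1;2]%nat z))
     (Cplus (sc (lam - 4) (Li [2;1]%nat z))
            (sc 8 (Li [1;1;1]%nat z))))
  | 4%nat =>
      Cplus (sc (lam^3/192 - lam^2/8 - lam/2 - 2) (Li [4%nat] z))
     (Cplus (sc (lam^2/8 - 2*lam + 4) (Li [3;1]%nat z))
     (Cplus (sc (lam^2/4 - 4*lam + 12) (Li [2;2]%nat z))
     (Cplus (sc (5*lam^2/8 - 8*lam + 28) (Li [1;3]%nat z))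
     (Cplus (sc (2*lam - 8) (Li [2;1;1]%nat z))
     (Cplus (sc (6*lam - 24) (Li [1;2;1]%nat z))
     (Cplus (sc (14*lam - 56) (Li [1;1;2]%nat z))
     (Cplus (sc 16 (Li [1;1;1;1]%nat z))
            (sc (2*lam*zeta3) (Li [1%nat] z)))))))))
  | _ => RtoC 0
  end.

Definition CV (lam : R) (l j : nat) : R :=
  match l, j with
  | 1, 1 => 2
  | 2, 1 => Rabs (lam/2 - 2)
  | 2, 2 => 4
  | 3, 1 => Rabs (lam^2/16 - lam + 2)
  | 3, 2 => Rabs (3*lam - 12) + Rabs (lam - 4)
  | 3, 3 => 8
  | 4, 1 => Rabs (lam^3/192 - lam^2/8 - lam/2 - 2) + Rabs (2*lam*zeta3)
  | 4, 2 => Rabs (lam^2/8 - 2*lam + 4) + Rabs (lam^2/4 - 4*lam + 12)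
            + Rabs (5*lam^2/8 - 8*lam + 28)
  | 4, 3 => Rabs (2*lam - 8) + Rabs (6*lam - 24) + Rabs (14*lam - 56)
  | 4, 4 => 16
  | _, _ => 0
  end.

Definition sum1 (f : nat -> R) (l : nat) : R := sum_lt (fun i => f (S i)) l.

Definition DV (lam : R) (l : nat) (a : R) : R :=
  sum1 (fun j => CV lam l j * Rabs (ln (1 - a)) ^ j / (a * INR (Factorial.fact j))) l.

(* Main.v *)
Require Import Defs.
From Stdlib Require Import Reals List Arith Lra Lia FunctionalExtensionality.
From Coquelicot Require Import Coquelicot.
Import ListNotations.
Open Scope R_scope.

Lemma sum_lt_le (f g : nat -> R) n : (forall i, (i < n)%nat -> f i <= g i) -> sum_lt f n <= sum_lt g n.
Proof. induction n; simpl; intros H. lra. 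
  assert (f n <= g n) by (apply H; lia). assert (sum_lt f n <= sum_lt g n) by (apply IHn; intros; apply H; lia). lra. Qed.

Lemma sum_lt_nonneg (f : nat -> R) n : (forall i, 0 <= f i) -> 0 <= sum_lt f n.
Proof. intros H; induction n; simpl. lra. specialize (H n); lra. Qed.

Lemma sum_lt_le1 (f : nat -> R) n : (forall i, f i <= 1) -> sum_lt f n <= INR n.
Proof. intros H; induction n; simpl sum_lt. simpl; lra. rewrite S_INR. specialize (H n); lra. Qed.

Definition ak (k : nat) := coef_rev (repeat 1%nat k).

Lemma ak_bounds k n : 0 <= ak k n <= 1.
Proof.
  revert n; induction k; intros n; unfold ak; cbn [coef_rev length repeat].
  - destruct n; lra.
  - destruct n. lra. fold (ak k).
    assert (HS: 0 < INR (S n)) by (apply lt_0_INR; lia).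
    assert (H1 := sum_lt_nonneg (ak k) (S n) (fun i => proj1 (IHk i))).
    assert (H2 := sum_lt_le1 (ak k) (S n) (fun i => proj2 (IHk i))).
    rewrite pow_1. split.
    + apply Rmult_le_pos; [apply Rlt_le, Rinv_0_lt_compat; lra | lra].
    + apply (Rmult_le_reg_l (INR (S n))); [lra|]. rewrite <- Rmult_assoc, Rinv_r; lra.
Qed.

Lemma coef_cmp ms n : List.Forall (fun m => (1 <= m)%nat) ms -> 0 <= coef_rev ms n <= ak (length ms) n.
Proof.
  intros HF; revert n; induction HF; intros N; unfold ak; cbn [coef_rev length repeat].
  - destruct N; lra.
  - destruct N. lra. fold (ak (length l)).
    assert (HS: 1 <= INR (S N)) by (rewrite S_INR; pose proof (pos_INR N); lra).
    assert (H1 := sum_lt_nonneg (coef_rev l) (S N) (fun i => proj1 (IHHF i))).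
    assert (H2 := sum_lt_le (coef_rev l) (ak (length l)) (S N) (fun i _ => proj2 (IHHF i))).
    idtac.
    assert (Hp : INR (S N) <= INR (S N) ^ x).
    { destruct x. lia. rewrite <- (Rmult_1_r (INR (S N))) at 1.
      change (INR (S N) ^ S x) with (INR (S N) * INR (S N) ^ x). apply Rmult_le_compat_l. lra.
      apply pow_R1_Rle; lra. }
    split.
    + apply Rmult_le_pos; [apply Rlt_le, Rinv_0_lt_compat, pow_lt; lra | lra].
    + apply Rmult_le_compat; try lra.
      * apply Rlt_le, Rinv_0_lt_compat, pow_lt; lra.
      * apply Rinv_le_contravar; lra.
Qed.

Lemma exR_le (a b : nat -> R) : (forall n, Rabs (a n) <= b n) -> ex_series b -> ex_series a.
Proof. intros H Hb. apply (@ex_series_le R_AbsRing R_CompleteNormedModule a b); auto. Qed.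

Lemma ex_series_geom_b (b : nat -> R) x : (forall n, Rabs (b n) <= 1) -> 0 <= x < 1 ->
  ex_series (fun n => b n * x ^ n).
Proof.
  intros Hb Hx. apply (exR_le _ (fun n => x ^ n)).
  - intros n.
    rewrite Rabs_mult, (Rabs_pos_eq (x ^ n)) by (apply pow_le; lra).
    rewrite <- (Rmult_1_l (x ^ n)) at 2. apply Rmult_le_compat_r. apply pow_le; lra. apply Hb.
  - eexists. apply is_series_geom. rewrite Rabs_pos_eq; lra.
Qed.

Lemma ak_abs k n : Rabs (ak k n) <= 1.
Proof. destruct (ak_bounds k n). rewrite Rabs_pos_eq; lra. Qed.

Lemma ak_radius k x : Rabs x < 1 -> Rbar_lt (Rabs x) (CV_radius (ak k)).
Proof.
  intros Hx. set (r := (Rabs x + 1) / 2).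
  assert (Hd : CV_disk (ak k) r).
  { unfold CV_disk. apply (ex_series_ext (fun n => Rabs (ak k n) * r ^ n)).
    - intros n. rewrite Rabs_mult, <- RPow_abs, (Rabs_pos_eq r). reflexivity.
      unfold r; pose proof (Rabs_pos x); lra.
    - apply ex_series_geom_b. intros n; rewrite Rabs_Rabsolu; apply ak_abs.
      unfold r; pose proof (Rabs_pos x); lra. }
  apply (Rbar_lt_le_trans _ r).
  - simpl. unfold r; lra.
  - unfold CV_radius. apply (proj1 (Lub_Rbar_correct (CV_disk (ak k)))). exact Hd.
Qed.

Lemma im_le_Cmod c : Rabs (Im c) <= Cmod c.
Proof. destruct c as [a b]; unfold Cmod; simpl. rewrite <- sqrt_Rsqr_abs. apply sqrt_le_1_alt.
  unfold Rsqr; nra. Qed.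

Lemma CSeries_bound (u : nat -> C) (v : nat -> R) :
  (forall n, Cmod (u n) <= v n) -> ex_series v -> Cmod (CSeries u) <= Series v.
Proof.
  intros Huv Hv.
  assert (HRe : ex_series (fun n => Re (u n))).
  { apply (exR_le _ v); auto. intros n.
    eapply Rle_trans. apply re_le_Cmod. apply Huv. }
  assert (HIm : ex_series (fun n => Im (u n))).
  { apply (exR_le _ v); auto. intros n.
    eapply Rle_trans. apply im_le_Cmod. apply Huv. }
  set (w := CSeries u).
  set (X := Re w). set (Y := Im w).
  assert (HX : X = Series (fun n => Re (u n))) by reflexivity.
  assert (HY : Y = Series (fun n => Im (u n))) by reflexivity.
  set (t := fun n => X * Re (u n) + Y * Im (u n)).
  assert (Ht : forall n, Rabs (t n) <= Cmod w * v n).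
  { intros n. eapply Rle_trans with (Cmod (Cconj w * u n)).
    - replace (t n) with (Re (Cconj w * u n)). apply re_le_Cmod.
      unfold t, X, Y. destruct w as [a b]; destruct (u n) as [c d]; simpl. ring.
    - rewrite Cmod_mult, Cmod_conj. apply Rmult_le_compat_l. apply Cmod_ge_0. apply Huv. }
  assert (Hvpos : forall n, 0 <= v n) by (intros n; eapply Rle_trans; [apply Cmod_ge_0| apply Huv]).
  assert (Hex2 : ex_series (fun n => Cmod w * v n)).
  { apply (ex_series_scal_l (Cmod w)) in Hv. exact Hv. }
  assert (Hsq : Cmod w ^ 2 = Series t).
  { rewrite Cmod2_alt. unfold t. rewrite Series_plus.
    rewrite !Series_scal_l. fold X Y. rewrite <- HX, <- HY. ring.
    apply (ex_series_scal_l X) in HRe. exact HRe.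
    apply (ex_series_scal_l Y) in HIm. exact HIm. }
  assert (Hle : Series t <= Cmod w * Series v).
  { eapply Rle_trans. apply Rle_abs. eapply Rle_trans. apply Series_Rabs.
    apply (exR_le _ (fun n => Cmod w * v n)); auto. intros n.
    rewrite Rabs_Rabsolu. apply Ht.
    rewrite <- Series_scal_l. apply Series_le; auto. intros n; split. apply Rabs_pos. apply Ht. }
  assert (Hvs : 0 <= Series v).
  { rewrite <- (Rmult_0_l (Series v)), <- Series_scal_l. 
    apply Series_le. intros n; specialize (Hvpos n); lra. auto. }
  pose proof (Cmod_ge_0 w). nra.
Qed.

Lemma Li_bound ms z : List.Forall (fun m => (1 <= m)%nat) ms -> Cmod z < 1 ->
  Cmod (Li ms z) <= PSeries (ak (length ms)) (Cmod z).
Proof.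
  intros HF Hz. unfold Li, PSeries. apply CSeries_bound.
  - intros n. rewrite Cmod_mult, Cmod_R, Cmod_pow.
    assert (HF' : List.Forall (fun m => (1 <= m)%nat) (rev ms)) by (apply Forall_rev; auto).
    destruct (coef_cmp (rev ms) n HF') as [H1 H2].
    rewrite length_rev in H2. rewrite Rabs_pos_eq by lra.
    apply Rmult_le_compat_r. apply pow_le, Cmod_ge_0. exact H2.
  - apply ex_series_geom_b. apply ak_abs. split. apply Cmod_ge_0. exact Hz.
Qed.

Definition G (k : nat) (x : R) := (- ln (1 - x)) ^ k / INR (fact k).

Lemma deriv_F k x : Rabs x < 1 ->
  is_derive (PSeries (ak (S k))) x (PSeries (ak k) x / (1 - x)).
Proof.
  intros Hx.
  assert (Hr := ak_radius (S k) x Hx).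
  assert (HD := is_derive_PSeries _ _ Hr).
  set (s := fun n => sum_lt (ak k) (S n)).
  assert (Hs : forall n, PS_derive (ak (S k)) n = s n).
  { intros n. unfold PS_derive, s. change (ak (S k) (S n)) with (/ INR (S n) ^ 1 * sum_lt (ak k) (S n)).
    rewrite pow_1, <- Rmult_assoc, Rinv_r, Rmult_1_l. reflexivity.
    apply not_0_INR; lia. }
  assert (Hexs : ex_pseries s x).
  { apply (ex_pseries_ext (PS_derive (ak (S k)))). exact Hs. apply ex_pseries_derive. exact Hr. }
  assert (Hm : forall n, PS_minus s (PS_incr_1 s) n = ak k n).
  { intros n. unfold PS_minus, PS_incr_1, plus, opp, zero; simpl. destruct n.
    - unfold s; simpl. lra.
    - unfold s. change (sum_lt (ak k) (S (S n))) with (sum_lt (ak k) (S n) + ak k (S n)). lra. }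
  assert (Heq : PSeries (ak k) x = (1 - x) * PSeries s x).
  { rewrite <- (PSeries_ext _ _ x Hm). rewrite PSeries_minus; auto.
    rewrite PSeries_incr_1. ring. apply ex_pseries_incr_1; auto. }
  replace (PSeries (ak k) x / (1 - x)) with (PSeries (PS_derive (ak (S k))) x).
  exact HD.
  rewrite Heq. rewrite (PSeries_ext _ _ x Hs). field.
  assert (x < 1) by (pose proof (Rle_abs x); lra). lra.
Qed.

Lemma deriv_G k x : x < 1 -> is_derive (G (S k)) x (G k x / (1 - x)).
Proof.
  intros Hx. unfold G. auto_derive.
  - lra.
  - change (match k with 0%nat => 1 | S _ => INR k + 1 end) with (INR (S k)).
    replace (fact k + k * fact k)%nat with (S k * fact k)%nat by (simpl; ring).
    rewrite mult_INR. unfold Rminus. field.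
    split. apply not_0_INR, fact_neq_0. split. lra. apply not_0_INR; lia.
Qed.

Lemma F_eq k x : 0 <= x < 1 -> PSeries (ak k) x = G k x.
Proof.
  revert x. induction k; intros x Hx.
  - unfold G. simpl. unfold PSeries. rewrite Series_incr_1.
    + rewrite (Series_ext _ (fun n => (fun _ : nat => 0) n * x ^ n)).
      * pose proof (PSeries_const_0 x) as H0; unfold PSeries in H0; rewrite H0.
        change (ak 0 0%nat) with 1. simpl. lra.
      * intros n. change (ak 0 (S n)) with 0. ring.
    + apply ex_series_geom_b. apply ak_abs. exact Hx.
  - set (h := fun t => PSeries (ak (S k)) t - G (S k) t).
    assert (Hd : forall t, 0 <= t < 1 -> is_derive h t 0).
    { intros t Ht. unfold h.
      assert (H1 := deriv_F k t (ltac:(rewrite Rabs_pos_eq; lra))).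
      assert (H2 := deriv_G k t (proj2 Ht)).
      rewrite (IHk t Ht) in H1.
      replace 0 with (G k t / (1 - t) - G k t / (1 - t)) by ring.
      apply (is_derive_minus _ _ t _ _ H1 H2). }
    destruct (MVT_gen h 0 x (fun _ => 0)) as [c [Hc Hhc]].
    + intros t Ht. rewrite Rmin_left, Rmax_right in Ht by lra. apply Hd. lra.
    + intros t Ht. rewrite Rmin_left, Rmax_right in Ht by lra.
      apply continuity_pt_filterlim, (@ex_derive_continuous R_AbsRing R_NormedModule). eexists. apply Hd. lra.
    + assert (h 0 = 0).
      { unfold h. rewrite PSeries_0. unfold G. rewrite Rminus_0_r, ln_1.
        change (ak (S k) 0%nat) with 0. simpl. field. apply not_0_INR, (fact_neq_0 (S k)). }
      unfold h in *. lra.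
Qed.

Lemma Cplus_bound u v A B : Cmod u <= A -> Cmod v <= B -> Cmod (Cplus u v) <= A + B.
Proof. intros; eapply Rle_trans. apply Cmod_triangle. lra. Qed.

Lemma sc_Li_bound r ms z : List.Forall (fun m => (1 <= m)%nat) ms -> Cmod z < 1 ->
  Cmod (sc r (Li ms z)) <= Rabs r * PSeries (ak (length ms)) (Cmod z).
Proof.
  intros HF Hz. unfold sc. rewrite Cmod_mult, Cmod_R. apply Rmult_le_compat_l. apply Rabs_pos.
  apply Li_bound; auto.
Qed.

Ltac fa := repeat (apply Forall_cons; [lia|]); apply Forall_nil.

Lemma V_bound lam l z : (1 <= l <= 4)%nat -> Cmod z < 1 ->
  Cmod (V lam l z) <= sum1 (fun j => CV lam l j * PSeries (ak j) (Cmod z)) l.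
Proof.
  intros Hl Hz.
  destruct l as [|[|[|[|[|l]]]]]; try lia; unfold V, sum1; cbn [sum_lt CV];
  (eapply Rle_trans; [ repeat apply Cplus_bound; apply sc_Li_bound; auto; fa |]);
  cbn [length]; rewrite ?(Rabs_pos_eq 2), ?(Rabs_pos_eq 4), ?(Rabs_pos_eq 8), ?(Rabs_pos_eq 16) by lra; apply Req_le; ring.
Qed.

Lemma sum_lt_ext (f g : nat -> R) n : (forall i, (i < n)%nat -> f i = g i) -> sum_lt f n = sum_lt g n.
Proof. induction n; simpl; intros H. auto. rewrite IHn, H; [auto|lia|intros; apply H; lia]. Qed.

Lemma sum_lt_scal (f : nat -> R) c n : sum_lt (fun i => c * f i) n = c * sum_lt f n.
Proof. induction n; simpl. ring. rewrite IHn; ring. Qed.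

Lemma CV_nonneg lam l j : 0 <= CV lam l j.
Proof.
  unfold CV; destruct l as [|[|[|[|[|l]]]]]; destruct j as [|[|[|[|[|j]]]]]; try lra;
  repeat apply Rplus_le_le_0_compat; apply Rabs_pos.
Qed.

Lemma F_mono k x a : 0 <= x <= a -> 0 < a -> a < 1 ->
  PSeries (ak (S k)) x <= x / a * PSeries (ak (S k)) a.
Proof.
  intros Hx Ha Ha1. unfold PSeries. rewrite <- Series_scal_l.
  apply Series_le.
  - intros n. destruct (ak_bounds (S k) n) as [b0 b1]. destruct n as [|m].
    + change (ak (S k) 0%nat) with 0. simpl. lra.
    + split. apply Rmult_le_pos; auto. apply pow_le; lra.
      simpl. 
      assert (x ^ m <= a ^ m) by (apply pow_incr; lra).
      assert (0 <= x ^ m) by (apply pow_le; lra).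
      replace (x / a * (ak (S k) (S m) * (a * a ^ m))) with (ak (S k) (S m) * (x * a ^ m)) by (field; lra).
      apply Rmult_le_compat_l; auto. nra.
  - replace (fun n => x / a * (ak (S k) n * a ^ n)) with (fun n => (x / a * ak (S k) n) * a ^ n) by (apply FunctionalExtensionality.functional_extensionality; intros; ring).
    apply ex_series_geom_b; [|lra]. intros n. destruct (ak_bounds (S k) n).
    assert (0 <= x / a <= 1) by (split; [apply Rdiv_le_0_compat; lra | apply (Rmult_le_reg_r a); [lra| unfold Rdiv; rewrite Rmult_assoc, Rinv_l; lra]]).
    rewrite Rabs_pos_eq by nra. nra.
Qed.

Theorem lemmaA2 (j01 : R)
  (hj_pos : 0 < j01) (hj_zero : J0 j01 = 0)
  (hj_first : forall x, 0 < x < j01 -> J0 x <> 0)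
  (l : nat) (hl : (1 <= l <= 4)%nat) (z : C) (hz : Cmod z < 1) :
  Cmod (V (j01 ^ 2) l z)
    <= sum1 (fun j => CV (j01 ^ 2) l j * Rabs (ln (1 - Cmod z)) ^ j / INR (Factorial.fact j)) l
  /\ (forall a : R, 0 < a < 1 -> Cmod z <= a ->
        Cmod (V (j01 ^ 2) l z) <= DV (j01 ^ 2) l a * Cmod z).
Proof.
  set (lam := j01 ^ 2). set (x := Cmod z).
  assert (Hx : 0 <= x < 1) by (split; [apply Cmod_ge_0 | exact hz]).
  assert (HV := V_bound lam l z hl hz). fold x in HV.
  assert (Habs : forall y, 0 <= y < 1 -> Rabs (ln (1 - y)) = - ln (1 - y)).
  { intros y Hy. apply Rabs_left1. rewrite <- ln_1. apply ln_le; lra. }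
  split.
  - eapply Rle_trans. exact HV. apply Req_le. unfold sum1. apply sum_lt_ext. intros i _.
    rewrite F_eq by exact Hx. unfold G. rewrite Habs by exact Hx. unfold Rdiv. ring.
  - intros a Ha Hxa. eapply Rle_trans. exact HV.
    unfold sum1, DV, sum1. rewrite Rmult_comm, <- sum_lt_scal.
    apply sum_lt_le. intros i _.
    eapply Rle_trans.
    { apply Rmult_le_compat_l. apply CV_nonneg. apply (F_mono i x a); lra. }
    apply Req_le. rewrite F_eq by lra. unfold G. rewrite Habs by lra.
    field. split. apply not_0_INR, fact_neq_0. lra.
Qed.
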